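(* Let $\Pi=(\mathcal{S},\mathcal{R})$ be a CRN protocol and let $S$ be a strongly connected component of its configuration digraph $D^{\Pi}$. Then $D^{\Pi}$ admits a weakly fair infinite path all of whose nodes lie in $S$ if and only if no reaction in $\mathcal{R}$ escapes from $S$.
   Context: A CRN protocol is a pair $\Pi=(\mathcal{S},\mathcal{R})$ with $\mathcal{S}$ a finite set of species and $\mathcal{R}\subset\mathbb{N}^{\mathcal{S}}\times\mathbb{N}^{\mathcal{S}}$ a finite set of reactions $\alpha=(\mathbf{r},\mathbf{p})$ ($\mathbf{r}$ = reactants, $\mathbf{p}$ = products, $\mathbb{N}=\{0,1,2,\dots\}$), where every reaction has $\|\mathbf{r}\|_1\in\{1,2\}$ and $\|\mathbf{r}\|_1\le\|\mathbf{p}\|_1$; for every $\mathbf{r}$ with $1\le\|\mathbf{r}\|_1\le 2$ the set $\mathcal{R}(\mathbf{r})$ of reactions with reactant vector $\mathbf{r}$ is nonempty; reactions with $\mathbf{r}=\mathbf{p}$ are void, and if $(\mathbf{r},\mathbf{r})\in\mathcal{R}$ then $\mathcal{R}(\mathbf{r})=\{(\mathbf{r},\mathbf{r})\}$. A configuration is $\mathbf{c}\in\mathbb{N}^{\mathcal{S}}$ with $\|\mathbf{c}\|_1\ge 1$. A reaction $(\mathbf{r},\mathbf{p})$ is applicable to $\mathbf{c}$ if $\mathbf{r}\le\mathbf{c}$ componentwise; $\operatorname{app}(\mathbf{c})$ is the set of applicable reactions, and then $\alpha(\mathbf{c})=\mathbf{c}-\mathbf{r}+\mathbf{p}$. The protocol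 respects finite density: the set of configurations reachable from any configuration is finite, with molecular counts $O(\|\mathbf{c}\|_1)$. The configuration digraph $D^{\Pi}$ has all configurations as nodes and, for each configuration $\mathbf{c}$ and each $\alpha\in\operatorname{app}(\mathbf{c})$, an $\alpha$-labeled edge from $\mathbf{c}$ to $\alpha(\mathbf{c})$. Infinite paths in $D^{\Pi}$ correspond to executions $\langle\mathbf{c}^t,\alpha^t\rangle_{t\ge0}$ ($\alpha^t\in\operatorname{app}(\mathbf{c}^t)$, $\mathbf{c}^{t+1}=\alpha^t(\mathbf{c}^t)$). An execution (path) is weakly fair if for every $t\ge0$ and every $\alpha\in\operatorname{app}(\mathbf{c}^t)$ there is $t'\ge t$ with $\alpha^{t'}=\alpha$ or $\alpha\notin\operatorname{app}(\mathbf{c}^{t'})$. A reaction $\alpha$ escapes from a component $S$ if for every $\mathbf{c}\in S$, $\alpha\in\operatorname{app}(\mathbf{c})$ and $\alpha(\mathbf{c})\notin S$. *)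

(* Defs.v *)
From mathcomp Require Import all_boot.
Set Implicit Arguments. Unset Strict Implicit. Unset Printing Implicit Defensive.

Section CRN.
Variable sp : finType.

Definition vec := {ffun sp -> nat}.
Definition reaction := (vec * vec)%type.   (* (reactants, products) *)

Definition norm1 (v : vec) : nat := \sum_(s : sp) v s.
Definition vle (u v : vec) : bool := [forall s, u s <= v s].

Definition is_config (c : vec) : Prop := 1 <= norm1 c.

Definition applicable (R : seq reaction) (a : reaction) (c : vec) : Prop :=
  a \in R /\ vle a.1 c.

Definition apply_rxn (a : reaction) (c : vec) : vec :=
  [ffun s => c s - a.1 s + a.2 s].

Definition edge (R : seq reaction) (c : vec) (a : reaction) (d : vec) : Prop :=
  is_config c /\ applicable R a c /\ d = apply_rxn a c.

Inductive reach (R : seq reaction) : vec -> vec -> Prop :=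
| reach_refl c : is_config c -> reach R c c
| reach_step c a d e : edge R c a d -> reach R d e -> reach R c e.

Definition is_CRN_protocol (R : seq reaction) : Prop :=
  (forall a, a \in R -> (1 <= norm1 a.1 <= 2) && (norm1 a.1 <= norm1 a.2))
  /\ (forall r : vec, 1 <= norm1 r <= 2 -> exists p, (r, p) \in R)
  /\ (forall r : vec, (r, r) \in R -> forall p, (r, p) \in R -> p = r)
  /\ (forall c, is_config c -> exists s : seq vec, forall d, reach R c d -> d \in s)
  /\ (exists K : nat, forall c d, is_config c -> reach R c d ->
        forall x : sp, d x <= K * norm1 c).

Definition is_SCC (R : seq reaction) (C : vec -> Prop) : Prop :=
  exists c0, is_config c0 /\
    forall d, C d <-> (reach R c0 d /\ reach R d c0).

Definition is_path (R : seq reaction) (c : nat -> vec) (a : nat -> reaction) : Prop :=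
  forall t, edge R (c t) (a t) (c t.+1).

Definition weakly_fair (R : seq reaction) (c : nat -> vec) (a : nat -> reaction) : Prop :=
  forall t al, applicable R al (c t) ->
    exists t', t <= t' /\ (a t' = al \/ ~ applicable R al (c t')).

Definition escapes (R : seq reaction) (al : reaction) (C : vec -> Prop) : Prop :=
  forall c, C c -> applicable R al c /\ ~ C (apply_rxn al c).

End CRN.

(* Main.v *)
Require Import Defs.
From mathcomp Require Import all_boot.
From Stdlib Require Import Classical.

Set Implicit Arguments. Unset Strict Implicit.

Section Helpers.
Variables (sp : finType) (R : seq (reaction sp)) (C : vec sp -> Prop).

Inductive walk : vec sp -> seq (vec sp * reaction sp) -> vec sp -> Prop :=
| wnil x : walk x [::] x
| wcons x a y w z : edge R x a y -> C x -> walk y w z -> walk x ((x,a)::w) z.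

Lemma walk_cat x w y w' z : walk x w y -> walk y w' z -> walk x (w ++ w') z.
Proof.
elim=> [x0 //|x0 a y0 w0 z0 He Hc _ IH] H /=.
exact: (wcons He Hc (IH H)).
Qed.

Lemma walk_nth0 x w z r : walk x w z -> (nth (z, r) w 0).1 = x.
Proof. by case. Qed.

Lemma walk_edge x w z r i : walk x w z -> i < size w ->
  edge R (nth (z,r) w i).1 (nth (z,r) w i).2 (nth (z,r) w i.+1).1.
Proof.
move=> H; elim: H i => [//|x0 a y w0 z0 He Hc Hw IH] [|i] /= Hi.
  by rewrite (walk_nth0 r Hw).
exact: IH.
Qed.

Lemma walk_C x w z r i : walk x w z -> C z -> i <= size w -> C (nth (z,r) w i).1.
Proof.
move=> H Cz; elim: H i Cz => [x0|x0 a y w0 z0 He Hc Hw IH] [|i] //= Cz Hi.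
exact: IH.
Qed.

Lemma reach_config c d : reach R c d -> is_config c /\ is_config d.
Proof. elim => [c0 H|c0 a d0 e [Hc _] _ [_ He]]; by split. Qed.

Lemma reach_trans x y z : reach R x y -> reach R y z -> reach R x z.
Proof.
elim => [c _ H|c a d e He _ IH H]; first exact H.
exact: (reach_step He (IH H)).
Qed.

Variable c0 : vec sp.
Hypothesis HSCC : forall d, C d <-> (reach R c0 d /\ reach R d c0).

Lemma reach_walk x y : reach R x y -> reach R y c0 -> reach R c0 x ->
  exists w, walk x w y.
Proof.
elim => [x0 Hx _ _|x0 a d e He Hde IH Hec Hcx].
  by exists [::]; constructor.
have Hd := (reach_config Hde).1.
have Hcd : reach R c0 d := reach_trans Hcx (reach_step He (reach_refl R Hd)).
have [w Hw] := IH Hec Hcd.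
exists ((x0,a)::w). apply: (wcons He _ Hw). apply/HSCC; split => //.
exact (reach_trans (reach_step He Hde) Hec).
Qed.

Lemma C_walk x y : C x -> C y -> exists w, walk x w y.
Proof.
move=> /HSCC [Hcx Hxc] /HSCC [Hcy Hyc].
exact: reach_walk (reach_trans Hxc Hcy) Hyc Hcx.
Qed.

Variable r0 : reaction sp.
Let d := (c0, r0).

Definition mark (w : seq (vec sp * reaction sp)) al :=
  exists j, (j < size w /\ (nth d w j).2 = al) \/
            (j <= size w /\ ~ applicable R al (nth d w j).1).

Lemma Cc0 : C c0.
Proof.
apply/HSCC.
Abort.

Hypothesis Hc0 : C c0.

Lemma segment al : al \in R -> ~ escapes R al C ->
  exists s, walk c0 s c0 /\ mark s al.
Proof.
move=> Hin Hne.
have : exists c, C c /\ (~ applicable R al c \/ C (apply_rxn al c)).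
  apply: NNPP => H; apply: Hne => c Hc; split.
    by apply: NNPP => Hn; apply: H; exists c; auto.
  by move=> Hn; apply: H; exists c; auto.
move=> [ca [Hca Hor]].
have [p1 Hp1] := C_walk Hc0 Hca.
case: (classic (applicable R al ca)) => Happ.
  case: Hor => [//|HCa].
  have [p2 Hp2] := C_walk HCa Hc0.
  exists (p1 ++ (ca, al) :: p2); split.
    apply: (walk_cat Hp1); apply: (wcons _ Hca Hp2).
    split; last by split.
    by have := (reach_config (proj1 (proj1 (HSCC ca) Hca))).2.
  exists (size p1); left; rewrite nth_cat ltnn subnn size_cat /=; split => //.
  by rewrite -addSnnS leq_addr.
have [p2 Hp2] := C_walk Hca Hc0.
exists (p1 ++ p2); split; first exact: walk_cat Hp1 Hp2.
exists (size p1); right; rewrite nth_cat ltnn subnn size_cat leq_addr.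
by rewrite /d (walk_nth0 r0 Hp2).
Qed.

Lemma nth_cat1 s w j : j <= size s -> walk c0 w c0 ->
  (nth d (s ++ w) j).1 = (nth d s j).1.
Proof.
move=> Hj Hw; rewrite nth_cat; case: ltnP => Hj2 //.
have -> : j = size s by apply/eqP; rewrite eqn_leq Hj Hj2.
by rewrite subnn (nth_default _ (leqnn (size s))) /d (walk_nth0 r0 Hw).
Qed.

Lemma full_walk (L : seq (reaction sp)) :
  (forall al, al \in L -> al \in R /\ ~ escapes R al C) ->
  exists w, walk c0 w c0 /\ forall al, al \in L -> mark w al.
Proof.
elim: L => [_|al L IH HL].
  by exists [::]; split => //; constructor.
have [w [Hw Hm]] := IH (fun x Hx => HL x (mem_behead (s:=al::L) Hx)).
have [Hin Hne] := HL al (mem_head _ _).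
have [s [Hs [j Hj]]] := segment Hin Hne.
exists (s ++ w); split; first exact: walk_cat Hs Hw.
move=> al'; rewrite in_cons => /orP [/eqP ->|HaL].
  exists j; case: Hj => [[Hj1 Hj2]|[Hj1 Hj2]].
    left; rewrite nth_cat Hj1 size_cat; split => //.
    exact: leq_trans Hj1 (leq_addr _ _).
  right; rewrite nth_cat1 // size_cat; split => //.
  exact: leq_trans Hj1 (leq_addr _ _).
have [k Hk] := Hm al' HaL.
have E : nth d (s ++ w) (size s + k) = nth d w k by rewrite nth_cat ltnNge leq_addr /= addKn.
exists (size s + k); rewrite E size_cat.
by rewrite ltn_add2l leq_add2l.
Qed.

End Helpers.

Theorem lemma3p1 (sp : finType) (R : seq (reaction sp)) (C : vec sp -> Prop) :
  is_CRN_protocol R -> is_SCC R C ->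
  ((exists (c : nat -> vec sp) (a : nat -> reaction sp),
      is_path R c a /\ weakly_fair R c a /\ forall t, C (c t))
   <-> (forall al, al \in R -> ~ escapes R al C)).
Proof.
move=> [_ [Hex _]] [c0 [Hc0 HSCC]]; split.
  move=> [c [a [Hp [Hf HC]]]] al Hin Hesc.
  have [Happ _] := Hesc (c 0) (HC 0).
  have [t' [_ [Heq|Hna]]] := Hf 0 al Happ.
    have [_ [_ Hn]] := Hp t'.
    apply: (Hesc (c t') (HC t')).2; rewrite -Heq -Hn; exact: HC.
  exact: Hna (Hesc (c t') (HC t')).1.
move=> Hno.
have HCc0 : C c0 by apply/HSCC; split; apply: reach_refl.
set r0 := (c0, c0).
have [w [Hw Hm]] := full_walk HSCC r0 HCc0 (fun al Hal => conj Hal (Hno al Hal)).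
set d := (c0, r0).
have : exists al, al \in R /\ applicable R al c0.
  case: (pickP (fun s => 0 < c0 s)) => [s Hs|H0]; last first.
    exfalso; move: Hc0; rewrite /is_config /norm1 big1 // => x _.
    by move: (H0 x) => /= /negbT; rewrite lt0n negbK => /eqP.
  pose rr : vec sp := [ffun x => nat_of_bool (x == s)].
  have Hn1 : norm1 rr = 1.
    rewrite /norm1 (bigD1 s) //= big1 => [|x /negbTE Hx]; rewrite ffunE ?eqxx ?Hx //.
  have [p Hp] := Hex rr ltac:(by rewrite Hn1).
  exists (rr, p); split => //; split => //.
  apply/forallP => x /=; rewrite ffunE; by case: eqP => [->|].
move=> [al [HalR Halapp]].
have Hn : 0 < size w.
  case: w Hw Hm => [Hw Hm|//].
  have [j [[//]|[_ Hj]]] := Hm al HalR.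
  by exfalso; apply: Hj; rewrite nth_nil.
set n := size w in Hn.
have Hmod : forall k, k <= n -> (nth d w (k %% n)).1 = (nth d w k).1.
  move=> k; rewrite leq_eqVlt => /orP [/eqP ->|Hk]; last by rewrite modn_small.
  by rewrite modnn (nth_default _ (leqnn n)) /d (walk_nth0 r0 Hw).
exists (fun t => (nth d w (t %% n)).1), (fun t => (nth d w (t %% n)).2).
split; [|split].
- move=> t.
  have Hi := ltn_pmod t Hn.
  have -> : t.+1 %% n = (t %% n).+1 %% n by rewrite -addn1 -modnDml addn1.
  rewrite [X in edge _ _ _ X]Hmod //. exact: (walk_edge r0 Hw Hi).
- move=> t al' Happ.
  have [j Hj] := Hm al' Happ.1.
  have Hjn : j <= n by case: Hj => [[/ltnW]|[]].
  exists ((t %/ n).+1 * n + j); split.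
    exact: leq_trans (ltnW (ltn_ceil t Hn)) (leq_addr _ _).
  rewrite modnMDl.
  case: Hj => [[Hj1 Hj2]|[Hj1 Hj2]].
    by left; rewrite modn_small.
  by right; rewrite Hmod.
- move=> t; apply: (walk_C _ Hw HCc0).
  exact: ltnW (ltn_pmod t Hn).
Qed.
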